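(* Let $k$ be a field and $R=k[x_1,\dots,x_n]$. If a polynomial $f\in R$ is computed by a formula of size $s$, then the diagram $R\xrightarrow{f}R$ (the $R$-module map sending $1\mapsto f$) is computed by a colimit computation in the category $R\text{-}\mathbf{Mod}$ of $R$-modules, with the basic morphisms listed below, of cost $O(s)$.
   Context: Basic morphisms in $R\text{-}\mathbf{Mod}$ (each of unit cost): multiplication by $x_i$, $R\xrightarrow{x_i}R$, for $i=1,\dots,n$; multiplication by $c$, $R\xrightarrow{c}R$, for each $c\in k$; the two inclusions $i_1,i_2:R\to R\oplus R$; the diagonal $\Delta:R\to R\oplus R$; the sum $+:R\oplus R\to R$; and $R\to\{0\}$. A formula is an arithmetic circuit (a finite directed acyclic graph whose indegree-$0$ vertices are labeled by variables or elements of $k$ and other vertices by $+$ or $\times$) in which every intermediate result is used at most once (the underlying graph is a tree); its size is the number of vertices. A diagram of finite shape $I=(V,E,s,t)$ assigns objects to vertices and morphisms $D(e):D(s(e))\to D(t(e))$ to edges (no commutativity required); subdiagrams are restrictions to full subgraphs. A colimit computation is a sequence of diagrams $(D_0,\dots,D_s)$ where $D_0$ consists only of basic morphisms and each $D_i$ ($i\ge1$) is obtained from $D_{i-1}$ by choosing a full subgraph $J_i$, adding a new vertex $v_i$ carrying a colimit of $D_{i-1}|_{J_i}$ and edges from each vertex of $J_i$ to $v_i$ carrying the colimit cocone morphisms, subject to constructivity: if $v_i$ lies in $J_j$ for some $j>i$ then $J_i\subseteq J_j$. It computes a diagram $D$ if $D$ is isomorphic to a not-necessarily-full subdiagram of $D_s$.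 Its cost is $s$ plus the number of edges of $D_0$. *)

(* Defs.v *)
From HB Require Import structures.
From mathcomp Require Import all_boot all_order all_algebra.
From mathcomp Require Import mpoly.
Set Implicit Arguments. Unset Strict Implicit. Unset Printing Implicit Defensive.
Import GRing.Theory.
Local Open Scope ring_scope.

Section ColimComp.
Variables (k : fieldType) (n : nat).

Notation R := {mpoly k[n]}.
Notation RMod := (lmodType R).

Inductive formula : Type :=
  | FVar of 'I_n
  | FConst of k
  | FAdd of formula & formula
  | FMul of formula & formula.

Fixpoint fsize (phi : formula) : nat :=
  match phi with
  | FVar _ | FConst _ => 1
  | FAdd a b | FMul a b => (fsize a + fsize b).+1
  end.

Fixpoint feval (phi : formula) : R :=
  match phi with
  | FVar i => 'X_i
  | FConst c => c%:MP
  | FAdd a b => feval a + feval b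
  | FMul a b => feval a * feval b
  end.

Definition computed_by_formula_of_size (f : R) (s : nat) : Prop :=
  exists phi : formula, feval phi = f /\ fsize phi = s.

Record diagram := Diagram {
  dV : finType;
  dE : finType;
  dobj : dV -> RMod;
  dsrc : dE -> dV;
  dtgt : dE -> dV;
  dmor : forall e : dE, {linear dobj (dsrc e) -> dobj (dtgt e)} }.

(* (L, c) is a colimit (in R-Mod) of the full subdiagram of D on the vertex set J;
   c v is only relevant for v \in J. *)
Definition is_colimit (D : diagram) (J : {set dV D}) (L : RMod)
    (c : forall v : dV D, {linear dobj v -> L}) : Prop :=
  (forall e : dE D, dsrc e \in J -> dtgt e \in J ->
     forall x, c (dtgt e) (dmor e x) = c (dsrc e) x) /\
  (forall (M : RMod) (d : forall v : dV D, {linear dobj v -> M}),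
     (forall e : dE D, dsrc e \in J -> dtgt e \in J ->
        forall x, d (dtgt e) (dmor e x) = d (dsrc e) x) ->
     (exists u : {linear L -> M}, forall v, v \in J -> forall x, u (c v x) = d v x) /\
     (forall u u' : {linear L -> M},
        (forall v, v \in J -> forall x, u (c v x) = d v x) ->
        (forall v, v \in J -> forall x, u' (c v x) = d v x) ->
        u =1 u')).

Inductive otag := OR | OR2 | O0.

Definition bobj (a : otag) : RMod :=
  match a with
  | OR => R^o
  | OR2 => (R^o * R^o)%type
  | O0 => 'rV[R]_0   (* the zero module {0} *)
  end.

Definition is_basic (a b : otag) : (bobj a -> bobj b) -> Prop :=
  match a as a0, b as b0 return (bobj a0 -> bobj b0) -> Prop with
  | OR, OR => fun g =>
      (exists i : 'I_n, forall x : R, g x = 'X_i * x) \/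
      (exists c : k, forall x : R, g x = c%:MP * x)
  | OR, OR2 => fun g =>
      (forall x : R, g x = (x, 0)) \/
      (forall x : R, g x = (0, x)) \/
      (forall x : R, g x = (x, x))
  | OR2, OR => fun g => forall x : R * R, g x = x.1 + x.2
  | OR, O0 => fun _ => True
  | _, _ => fun _ => False
  end.

(* A colimit computation (D_0, ..., D_s) is encoded by its data:
   - the initial diagram D_0 (vertex set V0, edge set E0, every vertex carrying a
     basic object and every edge a basic morphism);
   - the number s of steps; the new vertex v_i of step i (i : 'I_s) is [inr i], so
     the vertex set of D_s is V0 + 'I_s;
   - for each step i the chosen vertex set J_i, the colimit object L_i and the
     cocone morphisms coc i v : D(v) -> L_i (relevant for v \in J_i).
   The edges of D_s are the edges of D_0 together with one edge v -> v_i carrying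
   coc i v for every step i and every v \in J_i. *)

Definition cobj (V0 : finType) (vtag : V0 -> otag) (s : nat) (L : 'I_s -> RMod)
    (v : (V0 + 'I_s)%type) : RMod :=
  match v with inl a => bobj (vtag a) | inr j => L j end.

Record colim_comp := ColimComp {
  V0 : finType;
  E0 : finType;
  vtag : V0 -> otag;
  src0 : E0 -> V0;
  tgt0 : E0 -> V0;
  mor0 : forall e : E0, {linear bobj (vtag (src0 e)) -> bobj (vtag (tgt0 e))};
  nsteps : nat;
  Jset : 'I_nsteps -> {set (V0 + 'I_nsteps)%type};
  Lobj : 'I_nsteps -> RMod;
  coc : forall (i : 'I_nsteps) (v : (V0 + 'I_nsteps)%type),
          {linear cobj vtag Lobj v -> Lobj i} }.
Arguments vtag : clear implicits. Arguments src0 : clear implicits.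
Arguments tgt0 : clear implicits. Arguments mor0 : clear implicits.
Arguments Jset : clear implicits. Arguments Lobj : clear implicits.
Arguments coc : clear implicits.

Definition cc_edge (C : colim_comp) : finType :=
  (E0 C + {p : 'I_(nsteps C) * (V0 C + 'I_(nsteps C))%type | p.2 \in Jset C p.1})%type.

Definition cc_src (C : colim_comp) (e : cc_edge C) : (V0 C + 'I_(nsteps C))%type :=
  match e with inl e0 => inl (src0 C e0) | inr p => (val p).2 end.

Definition cc_tgt (C : colim_comp) (e : cc_edge C) : (V0 C + 'I_(nsteps C))%type :=
  match e with inl e0 => inl (tgt0 C e0) | inr p => inr (val p).1 end.

Definition cc_mor (C : colim_comp) (e : cc_edge C) :
    {linear cobj (vtag C) (Lobj C) (cc_src e) -> cobj (vtag C) (Lobj C) (cc_tgt e)} :=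
  match e as e' return
    {linear cobj (vtag C) (Lobj C) (cc_src e') -> cobj (vtag C) (Lobj C) (cc_tgt e')}
  with
  | inl e0 => mor0 C e0
  | inr p => coc C (val p).1 (val p).2
  end.

Definition final_diagram (C : colim_comp) : diagram :=
  @Diagram (V0 C + 'I_(nsteps C))%type (cc_edge C)
    (cobj (vtag C) (Lobj C)) (@cc_src C) (@cc_tgt C) (@cc_mor C).

(* Validity:
   - D_0 consists only of basic morphisms;
   - J_i is a set of vertices of D_{i-1} (i.e. of V0 and of earlier new vertices);
   - (L_i, coc i) is a colimit of the full subdiagram of D_{i-1} on J_i (which is
     the same as the full subdiagram of D_s on J_i, since J_i only contains
     vertices of D_{i-1} and D_{i-1} is a full subdiagram of D_s);
   - constructivity: if v_i \in J_j with j > i then J_i \subset J_j. *)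
Definition valid_cc (C : colim_comp) : Prop :=
  (forall e : E0 C, is_basic (mor0 C e)) /\
  (forall (i : 'I_(nsteps C)) (j : 'I_(nsteps C)), inr j \in Jset C i -> (j < i)%N) /\
  (forall i : 'I_(nsteps C), @is_colimit (final_diagram C) (Jset C i) (Lobj C i) (coc C i)) /\
  (forall (i j : 'I_(nsteps C)), (i < j)%N -> inr i \in Jset C j ->
      Jset C i \subset Jset C j).

Definition cc_cost (C : colim_comp) : nat := (nsteps C + #|E0 C|)%N.

Definition is_lin_iso (A B : RMod) (g : {linear A -> B}) : Prop :=
  exists h : B -> A, cancel g h /\ cancel h g.

(* C computes the diagram  R --f--> R  (two distinct vertices, one edge carrying
   multiplication by f): it is isomorphic to a (not necessarily full) subdiagram
   of D_s, i.e. some edge e of D_s between two distinct vertices, together with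
   isomorphisms a1 : R ~ D_s(src e), a2 : R ~ D_s(tgt e) making the square commute. *)
Definition computes_mul (C : colim_comp) (f : R) : Prop :=
  exists e : dE (final_diagram C),
    dsrc e != dtgt e /\
    exists (a1 : {linear R^o -> dobj (dsrc e)}) (a2 : {linear R^o -> dobj (dtgt e)}),
      is_lin_iso a1 /\ is_lin_iso a2 /\
      forall x : R^o, dmor e (a1 x) = a2 (f * x).

End ColimComp.

(* Main.v *)
Require Import Defs.
From HB Require Import structures.
From mathcomp Require Import all_boot all_order all_algebra.
From mathcomp Require Import mpoly.
From mathcomp Require Import ring zify.
Set Implicit Arguments. Unset Strict Implicit. Unset Printing Implicit Defensive.
Import GRing.Theory.
Local Open Scope ring_scope.

Section S.
Variables (k : fieldType) (n : nat).
Notation R := {mpoly k[n]}.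

Definition mulL (r : R) (x : R^o) : R^o := r * x.
Fact mulL_lin r : linear (mulL r).
Proof. move=> a x y; rewrite /mulL /GRing.scale /=; ring. Qed.
HB.instance Definition _ r := GRing.isLinear.Build R R^o R^o _ (mulL r) (mulL_lin r).

Definition pairL (p q : R) (x : R^o * R^o) : R^o := p * x.1 + q * x.2.
Fact pairL_lin p q : linear (pairL p q).
Proof. move=> a [x1 x2] [y1 y2]; rewrite /pairL /= /GRing.scale /=; ring. Qed.
HB.instance Definition _ p q := GRing.isLinear.Build R (R^o * R^o)%type R^o _ (pairL p q) (pairL_lin p q).

Definition kindL (o : option bool) (x : R^o) : R^o * R^o :=
  match o with None => (x, x) | Some true => (x, 0) | Some false => (0, x) end.
Fact kindL_lin o : linear (kindL o).
Proof. case: o => [[]|] a x y; apply/pair_equal_spec; split => /=; rewrite /GRing.scale /= ?mulr0 ?addr0 ?add0r //. Qed.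
HB.instance Definition _ o := GRing.isLinear.Build R R^o (R^o * R^o)%type _ (kindL o) (kindL_lin o).

Definition idL (x : R^o) : R^o := x.
Fact idL_lin : linear idL. Proof. by []. Qed.
HB.instance Definition _ := GRing.isLinear.Build R R^o R^o _ idL idL_lin.


Notation F := (formula k n).

Fixpoint RV (phi : F) : finType :=
  match phi with
  | FVar _ | FConst _ => bool
  | FAdd a b => (RV a + RV b + bool)%type
  | FMul a b => (RV a + RV b)%type
  end.

Fixpoint XV (phi : F) : finType :=
  match phi with
  | FVar _ | FConst _ => void
  | FAdd a b => (XV a + XV b + bool)%type
  | FMul a b => (XV a + XV b)%type
  end.

Fixpoint Av (phi : F) : RV phi :=
  match phi as p return RV p with
  | FVar _ | FConst _ => false
  | FAdd a b => inr false
  | FMul a b => inl (Av a)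
  end.

Fixpoint Tv (phi : F) : RV phi :=
  match phi as p return RV p with
  | FVar _ | FConst _ => true
  | FAdd a b => inr true
  | FMul a b => inr (Tv b)
  end.

Fixpoint cR (phi : F) : RV phi -> R :=
  match phi as p return RV p -> R with
  | FVar i => fun v => if v then 1 else 'X_i
  | FConst c => fun v => if v then 1 else c%:MP
  | FAdd a b => fun v => match v with
                | inl (inl v) => cR v
                | inl (inr v) => cR v
                | inr w => if w then 1 else feval a + feval b end
  | FMul a b => fun v => match v with
                | inl v => feval b * cR v
                | inr v => cR v end
  end.

Fixpoint cX (phi : F) : XV phi -> R * R :=
  match phi as p return XV p -> R * R with
  | FVar _ | FConst _ => fun v => match v with end
  | FAdd a b => fun v => match v with
                | inl (inl v) => cX v
                | inl (inr v) => cX v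
                | inr w => if w then (1, 1) else (feval a, feval b) end
  | FMul a b => fun v => match v with
                | inl v => (feval b * (cX v).1, feval b * (cX v).2)
                | inr v => cX v end
  end.

Fixpoint ERR (phi : F) : finType :=
  match phi with
  | FVar _ | FConst _ => unit
  | FAdd a b => (ERR a + ERR b)%type
  | FMul a b => (ERR a + ERR b + unit)%type
  end.

Fixpoint sRR (phi : F) : ERR phi -> RV phi :=
  match phi as p return ERR p -> RV p with
  | FVar _ | FConst _ => fun _ => false
  | FAdd a b => fun e => match e with
                | inl e => inl (inl (sRR e)) | inr e => inl (inr (sRR e)) end
  | FMul a b => fun e => match e with
                | inl (inl e) => inl (sRR e) | inl (inr e) => inr (sRR e)
                | inr _ => inl (Tv a) end
  end.

Fixpoint tRR (phi : F) : ERR phi -> RV phi :=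
  match phi as p return ERR p -> RV p with
  | FVar _ | FConst _ => fun _ => true
  | FAdd a b => fun e => match e with
                | inl e => inl (inl (tRR e)) | inr e => inl (inr (tRR e)) end
  | FMul a b => fun e => match e with
                | inl (inl e) => inl (tRR e) | inl (inr e) => inr (tRR e)
                | inr _ => inr (Av b) end
  end.

Fixpoint mRR (phi : F) : ERR phi -> R :=
  match phi as p return ERR p -> R with
  | FVar i => fun _ => 'X_i
  | FConst c => fun _ => c%:MP
  | FAdd a b => fun e => match e with
                | inl e => mRR e | inr e => mRR e end
  | FMul a b => fun e => match e with
                | inl (inl e) => mRR e | inl (inr e) => mRR e
                | inr _ => 1 end
  end.

Fixpoint ERX (phi : F) : finType :=
  match phi with
  | FVar _ | FConst _ => void
  | FAdd a b => (ERX a + ERX b + (bool * bool + unit))%type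
  | FMul a b => (ERX a + ERX b)%type
  end.

Fixpoint sRX (phi : F) : ERX phi -> RV phi :=
  match phi as p return ERX p -> RV p with
  | FVar _ | FConst _ => fun e => match e with end
  | FAdd a b => fun e => match e with
                | inl (inl e) => inl (inl (sRX e))
                | inl (inr e) => inl (inr (sRX e))
                | inr (inl (false, true)) => inl (inl (Av a))
                | inr (inl (false, false)) => inl (inr (Av b))
                | inr (inl (true, true)) => inl (inl (Tv a))
                | inr (inl (true, false)) => inl (inr (Tv b))
                | inr (inr _) => inr false end
  | FMul a b => fun e => match e with
                | inl e => inl (sRX e) | inr e => inr (sRX e) end
  end.

Fixpoint tRX (phi : F) : ERX phi -> XV phi :=
  match phi as p return ERX p -> XV p with
  | FVar _ | FConst _ => fun e => match e with end
  | FAdd a b => fun e => match e with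
                | inl (inl e) => inl (inl (tRX e))
                | inl (inr e) => inl (inr (tRX e))
                | inr (inl (w, _)) => inr w
                | inr (inr _) => inr false end
  | FMul a b => fun e => match e with
                | inl e => inl (tRX e) | inr e => inr (tRX e) end
  end.

Fixpoint kRX (phi : F) : ERX phi -> option bool :=
  match phi as p return ERX p -> option bool with
  | FVar _ | FConst _ => fun e => match e with end
  | FAdd a b => fun e => match e with
                | inl (inl e) => kRX e
                | inl (inr e) => kRX e
                | inr (inl (_, s)) => Some s
                | inr (inr _) => None end
  | FMul a b => fun e => match e with
                | inl e => kRX e | inr e => kRX e end
  end.

Fixpoint EXR (phi : F) : finType :=
  match phi with
  | FVar _ | FConst _ => void
  | FAdd a b => (EXR a + EXR b + unit)%type
  | FMul a b => (EXR a + EXR b)%type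
  end.

Fixpoint sXR (phi : F) : EXR phi -> XV phi :=
  match phi as p return EXR p -> XV p with
  | FVar _ | FConst _ => fun e => match e with end
  | FAdd a b => fun e => match e with
                | inl (inl e) => inl (inl (sXR e))
                | inl (inr e) => inl (inr (sXR e))
                | inr _ => inr true end
  | FMul a b => fun e => match e with
                | inl e => inl (sXR e) | inr e => inr (sXR e) end
  end.

Fixpoint tXR (phi : F) : EXR phi -> RV phi :=
  match phi as p return EXR p -> RV p with
  | FVar _ | FConst _ => fun e => match e with end
  | FAdd a b => fun e => match e with
                | inl (inl e) => inl (inl (tXR e))
                | inl (inr e) => inl (inr (tXR e))
                | inr _ => inr true end
  | FMul a b => fun e => match e with
                | inl e => inl (tXR e) | inr e => inr (tXR e) end
  end.

Lemma cR_A phi : cR (Av phi) = feval phi.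
Proof. elim: phi => //= a IHa b IHb; rewrite IHa; exact: mulrC. Qed.

Lemma cR_T phi : cR (Tv phi) = 1.
Proof. by elim: phi => //= a IHa b IHb. Qed.

Lemma consRR phi (e : ERR phi) : cR (tRR e) * mRR e = cR (sRR e).
Proof.
elim: phi e => [i|c|a IHa b IHb|a IHa b IHb] /=.
- by move=> _; rewrite mul1r.
- by move=> _; rewrite mul1r.
- by case=> e.
- case=> [[e|e]|_] /=; rewrite ?IHb //.
  + by rewrite -mulrA IHa.
  + by rewrite cR_A cR_T.
Qed.

Lemma pairL_scale c p q y : pairL (c * p) (c * q) y = c * pairL p q y.
Proof. by rewrite /pairL mulrDr !mulrA. Qed.

Lemma consRX phi (e : ERX phi) x :
  pairL (cX (tRX e)).1 (cX (tRX e)).2 (kindL (kRX e) x) = cR (sRX e) * x.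
Proof.
elim: phi e => [i|c|a IHa b IHb|a IHa b IHb] /=; try by case.
- case=> [[e|e]|[[[] []]|[]]] //=; rewrite /pairL /= ?cR_A ?cR_T ?mulr0 ?addr0 ?add0r ?mul1r ?mulrDl //.
- case=> [e|e] /=; last exact: IHb.
  by rewrite pairL_scale IHa mulrA.
Qed.

Lemma consXR phi (e : EXR phi) : cX (sXR e) = (cR (tXR e), cR (tXR e)).
Proof.
elim: phi e => [i|c|a IHa b IHb|a IHa b IHb] /=; try by case.
- by case=> [[e|e]|[]] /=.
- by case=> [e|e] /=; rewrite ?IHa ?IHb.
Qed.

Lemma univ phi (M : lmodType R) (dR : RV phi -> R -> M) (dX : XV phi -> R * R -> M) :
  (forall v x y, dR v (x + y) = dR v x + dR v y) ->
  (forall z a b, dX z (a, b) = dX z (a, 0) + dX z (0, b)) ->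
  (forall e x, dR (tRR e) (mRR e * x) = dR (sRR e) x) ->
  (forall e x, dX (tRX e) (kindL (kRX e) x) = dR (sRX e) x) ->
  (forall e x, dR (tXR e) (x.1 + x.2) = dX (sXR e) x) ->
  (forall v x, dR v x = dR (Tv phi) (cR v * x)) /\
  (forall z x, dX z x = dR (Tv phi) (pairL (cX z).1 (cX z).2 x)).
Proof.
elim: phi dR dX => [i|c|a IHa b IHb|a IHa b IHb] dR dX HRa HXa HRR HRX HXR /=.
- split; last by case.
  case=> x /=; first by rewrite mul1r.
  by rewrite -(HRR tt x).
- split; last by case.
  case=> x /=; first by rewrite mul1r.
  by rewrite -(HRR tt x).
- have [Pa Qa] := IHa (fun v => dR (inl (inl v))) (fun z => dX (inl (inl z)))
    (fun v => HRa (inl (inl v))) (fun z => HXa (inl (inl z)))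
    (fun e => HRR (inl e)) (fun e => HRX (inl (inl e))) (fun e => HXR (inl (inl e))).
  have [Pb Qb] := IHb (fun v => dR (inl (inr v))) (fun z => dX (inl (inr z)))
    (fun v => HRa (inl (inr v))) (fun z => HXa (inl (inr z)))
    (fun e => HRR (inr e)) (fun e => HRX (inl (inr e))) (fun e => HXR (inl (inr e))).
  have HZ2 : forall x, dX (inr true) x = dR (inr true) (x.1 + x.2).
    by move=> x; rewrite (HXR (inr tt) x).
  have HTa : forall t, dR (inl (inl (Tv a))) t = dR (inr true) t.
    move=> t; rewrite -(HRX (inr (inl (true, true))) t) /= HZ2 /=.
    by rewrite addr0.
  have HTb : forall t, dR (inl (inr (Tv b))) t = dR (inr true) t.
    move=> t; rewrite -(HRX (inr (inl (true, false))) t) /= HZ2 /=.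
    by rewrite add0r.
  have HZ : forall x, dX (inr false) x =
      dR (inr true) (feval a * x.1 + feval b * x.2).
    case=> x1 x2; rewrite HXa HRa /=.
    have E1 := HRX (inr (inl (false, true))) x1.
    have E2 := HRX (inr (inl (false, false))) x2.
    simpl in E1, E2.
    rewrite E1 E2.
    by rewrite Pa Pb HTa HTb !cR_A.
  split.
  + case=> [[v|v]|[]] x /=.
    * by rewrite Pa HTa.
    * by rewrite Pb HTb.
    * by rewrite mul1r.
    * by rewrite -(HRX (inr (inr tt)) x) /= HZ /= mulrDl.
  + case=> [[z|z]|[]] x /=.
    * by rewrite Qa HTa.
    * by rewrite Qb HTb.
    * by rewrite HZ2 /pairL !mul1r.
    * by rewrite HZ.
- have [Pa Qa] := IHa (fun v => dR (inl v)) (fun z => dX (inl z))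
    (fun v => HRa (inl v)) (fun z => HXa (inl z))
    (fun e => HRR (inl (inl e))) (fun e => HRX (inl e)) (fun e => HXR (inl e)).
  have [Pb Qb] := IHb (fun v => dR (inr v)) (fun z => dX (inr z))
    (fun v => HRa (inr v)) (fun z => HXa (inr z))
    (fun e => HRR (inl (inr e))) (fun e => HRX (inr e)) (fun e => HXR (inr e)).
  have HTa : forall t, dR (inl (Tv a)) t = dR (inr (Tv b)) (feval b * t).
    by move=> t; rewrite -(HRR (inr tt) t) /= mul1r Pb cR_A.
  split.
  + case=> v x /=.
    * by rewrite Pa HTa mulrA.
    * exact: Pb.
  + case=> z x /=.
    * by rewrite Qa HTa pairL_scale.
    * exact: Qb.
Qed.

Definition V0c phi : finType := (RV phi + XV phi)%type.
Definition vtagc phi (v : V0c phi) : otag := if v is inl _ then OR else OR2.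
Definition E0c phi : finType := (ERR phi + ERX phi + EXR phi)%type.
Definition src0c phi (e : E0c phi) : V0c phi :=
  match e with inl (inl e) => inl (sRR e) | inl (inr e) => inl (sRX e)
  | inr e => inr (sXR e) end.
Definition tgt0c phi (e : E0c phi) : V0c phi :=
  match e with inl (inl e) => inl (tRR e) | inl (inr e) => inr (tRX e)
  | inr e => inl (tXR e) end.
Definition mor0c phi (e : E0c phi) :
    {linear bobj k n (vtagc (src0c e)) -> bobj k n (vtagc (tgt0c e))} :=
  match e as e' return
    {linear bobj k n (vtagc (src0c e')) -> bobj k n (vtagc (tgt0c e'))} with
  | inl (inl e) => mulL (mRR e)
  | inl (inr e) => kindL (kRX e)
  | inr e => pairL 1 1
  end.
Definition Jc phi (i : 'I_1) : {set (V0c phi + 'I_1)%type} :=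
  [set v : (V0c phi + 'I_1)%type | if v is inl _ then true else false].
Definition Lobjc (i : 'I_1) : lmodType R := R^o.
Definition cocc phi (i : 'I_1) (v : (V0c phi + 'I_1)%type) :
    {linear cobj (@vtagc phi) Lobjc v -> Lobjc i} :=
  match v as v' return {linear cobj (@vtagc phi) Lobjc v' -> Lobjc i} with
  | inl (inl r) => mulL (cR r)
  | inl (inr z) => pairL (cX z).1 (cX z).2
  | inr _ => mulL 0
  end.
Definition Cc phi : colim_comp k n :=
  @ColimComp k n (V0c phi) (E0c phi) (@vtagc phi) (@src0c phi) (@tgt0c phi)
    (@mor0c phi) 1 (@Jc phi) Lobjc (@cocc phi).

Lemma mRR_basic phi (e : ERR phi) :
  (exists i, mRR e = 'X_i) \/ (exists c, mRR e = c%:MP).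
Proof.
elim: phi e => [i|c|a IHa b IHb|a IHa b IHb] /=.
- by move=> _; left; exists i.
- by move=> _; right; exists c.
- by case=> e; [exact: IHa | exact: IHb].
- case=> [[e|e]|_]; [exact: IHa | exact: IHb |].
  by right; exists 1; rewrite mpolyC1.
Qed.

Lemma Cc_valid phi : valid_cc (Cc phi).
Proof.
split; [|split; [|split]].
- case=> [[e|e]|e] /=.
  + case: (mRR_basic e) => [[i Hi]|[c Hc]].
    * by left; exists i => x; rewrite /mulL Hi.
    * by right; exists c => x; rewrite /mulL Hc.
  + by case: (kRX e) => [[]|]; [left | right; left | right; right].
  + by move=> x; rewrite /pairL !mul1r.
- by move=> i j; rewrite inE.
- move=> i; split.
  + case=> [[[e|e]|e]|p] //=.
    * by move=> _ _ x; rewrite /mulL mulrA consRR.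
    * by move=> _ _ x; rewrite consRX.
    * by move=> _ _ x; rewrite consXR /pairL /mulL /= !mul1r mulrDr.
    * by move=> _; rewrite !inE.
  + move=> M d Hd.
    pose dR := fun (r : RV phi) (x : R) => d (inl (inl r)) x.
    pose dX := fun (z : XV phi) (x : R * R) => d (inl (inr z)) x.
    have [P Q] : (forall v x, dR v x = dR (Tv phi) (cR v * x)) /\
      (forall z x, dX z x = dR (Tv phi) (pairL (cX z).1 (cX z).2 x)).
      apply: univ.
      * by move=> v x y; rewrite /dR raddfD.
      * move=> z a b; rewrite /dX -raddfD /=; apply: f_equal.
        by apply/pair_equal_spec; split; rewrite /= ?addr0 ?add0r.
      * by move=> e x; apply: (Hd (inl (inl (inl e)))); rewrite inE.
      * by move=> e x; apply: (Hd (inl (inl (inr e)))); rewrite inE.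
      * move=> e x.
        have H := Hd (inl (inr e)) (ltac:(by rewrite inE)) (ltac:(by rewrite inE)) x.
        rewrite /dR /dX -H /= /pairL /mulL.
        by rewrite !mul1r.
    split.
    * exists (d (inl (inl (Tv phi)))).
      case=> [[r|z]|j]; rewrite inE //= => _ x.
      - exact: (esym (P r x)).
      - exact: (esym (Q z x)).
    * move=> u u' Hu Hu' y.
      have HT : (inl (inl (Tv phi)) : (V0c phi + 'I_1)%type) \in Jc phi i by rewrite inE.
      have := Hu (inl (inl (Tv phi))) HT y.
      have := Hu' (inl (inl (Tv phi))) HT y.
      rewrite /= /mulL cR_T mul1r => -> -> //.
- by move=> i j; rewrite !ord1.
Qed.

Lemma Cc_computes phi : computes_mul (Cc phi) (feval phi).
Proof.
have HJ : (inl (inl (Av phi)) : (V0c phi + 'I_1)%type) \in Jc phi ord0 by rewrite inE.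
exists (inr (exist _ (ord0, inl (inl (Av phi))) HJ)).
split; first by [].
exists (idL : {linear R^o -> R^o}), (idL : {linear R^o -> R^o}).
split; first by exists idL.
split; first by exists idL.
by move=> x; rewrite /= /mulL /idL cR_A.
Qed.

Lemma card_edges phi :
  (#|{: ERR phi}| + #|{: ERX phi}| + #|{: EXR phi}| <= 6 * fsize phi)%N.
Proof.
elim: phi => [i|c|a IHa b IHb|a IHa b IHb] /=;
  rewrite ?card_sum ?card_prod ?card_bool ?card_unit ?card_void //; lia.
Qed.

Lemma fsize_gt0 (phi : F) : (0 < fsize phi)%N.
Proof. by case: phi. Qed.

End S.

Theorem proposition5p6 :
  exists c0 : nat,
    forall (k : fieldType) (n : nat) (f : {mpoly k[n]}) (s : nat),
      computed_by_formula_of_size f s ->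
      exists C : colim_comp k n,
        valid_cc C /\ computes_mul C f /\ (cc_cost C <= c0 * s)%N.
Proof.
exists 7 => k n f s [phi [<- <-]].
exists (Cc phi); split; first exact: Cc_valid.
split; first exact: Cc_computes.
rewrite /cc_cost /= /E0c !card_sum.
have := card_edges phi; have := fsize_gt0 phi; lia.
Qed.
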